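(* For integers $F\ge1$ and $0\le Z\le F$, $$s(F,2,Z)=\begin{cases}2F-3Z & \text{if } F\ge 2Z,\\ F-Z & \text{otherwise.}\end{cases}$$
   Context: A placement delivery array $S$-PDA$(F,K,Z)$ is an $F\times K$ array $R=(r_{j,k})$, $1\le j\le F$, $1\le k\le K$, over a finite set $S$ such that: (1) each cell is either empty or contains an element of $S$; (2) each column contains exactly $Z$ empty cells; (3) each element of $S$ occurs at most once in each row and at most once in each column; (4) if two distinct nonempty cells satisfy $r_{j_1,k_1}=r_{j_2,k_2}=t\in S$, then the cells $r_{j_1,k_2}$ and $r_{j_2,k_1}$ are empty. For integers $F,K\ge1$, $0\le Z\le F$, define $s(F,K,Z)=\min\{|S| : \text{there exists an } S\text{-PDA}(F,K,Z)\}$. *)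

(* Defs.v *)
From mathcomp Require Import all_boot.
Set Implicit Arguments. Unset Strict Implicit. Unset Printing Implicit Defensive.

(* An F x K array over a finite symbol set S, with S represented as 'I_n
   (any finite set S is in bijection with 'I_|S|).  A cell is [None] when
   empty and [Some t] when it contains the symbol t. *)
Definition array (F K n : nat) := 'I_F -> 'I_K -> option 'I_n.

Definition is_PDA (F K Z n : nat) (R : array F K n) : Prop :=
  (forall k : 'I_K, #|[set j : 'I_F | R j k == None]| = Z) /\
  (forall (j : 'I_F) (k1 k2 : 'I_K) (t : 'I_n),
      R j k1 = Some t -> R j k2 = Some t -> k1 = k2) /\
  (forall (j1 j2 : 'I_F) (k : 'I_K) (t : 'I_n),
      R j1 k = Some t -> R j2 k = Some t -> j1 = j2) /\
  (forall (j1 j2 : 'I_F) (k1 k2 : 'I_K) (t : 'I_n),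
      (j1, k1) <> (j2, k2) -> R j1 k1 = Some t -> R j2 k2 = Some t ->
      R j1 k2 = None /\ R j2 k1 = None).

(* [s_is F K Z m] : m = s(F,K,Z), i.e. m is the minimum of |S| over all
   S-PDA(F,K,Z): it is attained, and it is a lower bound. *)
Definition s_is (F K Z m : nat) : Prop :=
  (exists R : array F K m, is_PDA Z R) /\
  (forall (n : nat) (R : array F K n), is_PDA Z R -> m <= n).

(* Main.v *)
Require Import Defs.
From mathcomp Require Import all_boot zify.
Set Implicit Arguments. Unset Strict Implicit.
Lemma card_count F (P : pred nat) : #|[set j : 'I_F | P (val j)]| = count P (iota 0 F).
Proof.
rewrite -val_enum_ord count_map cardsE cardE /enum_mem size_filter.
by rewrite (@eq_filter _ _ predT) // filter_predT.
Qed.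
Lemma count_const (P : pred nat) a m (b : bool) : (forall i, a <= i < a + m -> P i = b) ->
  count P (iota a m) = if b then m else 0.
Proof.
move=> H; rewrite (eq_in_count (a2 := fun _ => b)); last by move=> i; rewrite mem_iota => /H.
case: (b) {H}; rewrite ?count_pred0 ?count_predT ?size_iota //.
Qed.

Definition cell (b d j k : nat) : option nat :=
  if k == 0 then
    (if j < b then Some j else if j < 2*b then None else if j < 2*b+d then Some (j-b) else None)
  else
    (if j < b then None else if j < 2*b then Some (j-b) else if j < 2*b+d then Some (j-b+d) else None).

Definition Rc F b d : array F 2 (b + 2*d) := fun j k => obind insub (cell b d j k).
Arguments Rc : clear implicits.

Lemma cell_bound b d j k x : cell b d j k = Some x -> x < b + 2*d.
Proof. rewrite /cell; case: (k == 0); repeat case: ifP => ?; move=> // [<-]; lia. Qed.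

Lemma Rc_some F b d j k t : Rc F b d j k = Some t <-> cell b d (val j) (val k) = Some (val t).
Proof.
rewrite /Rc; case E: (cell b d j k) => [x|] //=.
have hb := cell_bound E; case: insubP => [u _ hu|hn]; last by rewrite hb in hn.
subst x; split; [by move=> [->]|by move=> [/val_inj ->]].
Qed.

Lemma Rc_none F b d j k : Rc F b d j k = None <-> cell b d (val j) (val k) = None.
Proof.
rewrite /Rc; case E: (cell b d j k) => [x|] //=.
have hb := cell_bound E; case: insubP => [u _ hu|hn]; last by rewrite hb in hn.
by split.
Qed.

Lemma Rc_PDA F Z b d : 2*b + d <= F -> Z = b + (F - 2*b - d) -> is_PDA Z (Rc F b d).
Proof.
move=> h1 h2; split; [|split; [|split]].
- move=> k.
  rewrite (eq_finset (fun j : 'I_F => (fun n => cell b d n k == None) (val j))); last first.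
    move=> j; apply/eqP/eqP; by move/Rc_none.
  rewrite (card_count F (fun n => cell b d n k == None)).
  have -> : F = b + b + d + (F - 2*b - d) by lia.
  rewrite !iotaD !count_cat !add0n.
  case: k => [[|[|k]] hk] //=.
  + rewrite (@count_const _ _ _ false); last by move=> i hi; rewrite /cell /=; repeat case: ifP => ? //; lia.
    rewrite (@count_const _ _ _ true); last by move=> i hi; rewrite /cell /=; repeat case: ifP => ? //; lia.
    rewrite (@count_const _ _ _ false); last by move=> i hi; rewrite /cell /=; repeat case: ifP => ? //; lia.
    rewrite (@count_const _ _ _ true); last by move=> i hi; rewrite /cell /=; repeat case: ifP => ? //; lia.
    lia.
  + rewrite (@count_const _ _ _ true); last by move=> i hi; rewrite /cell /=; repeat case: ifP => ? //; lia.
    rewrite (@count_const _ _ _ false); last by move=> i hi; rewrite /cell /=; repeat case: ifP => ? //; lia.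
    rewrite (@count_const _ _ _ false); last by move=> i hi; rewrite /cell /=; repeat case: ifP => ? //; lia.
    rewrite (@count_const _ _ _ true); last by move=> i hi; rewrite /cell /=; repeat case: ifP => ? //; lia.
    lia.
- move=> j [[|[|k1]] hk1] [[|[|k2]] hk2] t //= /Rc_some /= H1 /Rc_some /= H2;
    try (apply: val_inj => //); move: H1 H2; rewrite /cell /=;
    repeat case: ifP => ? //; move=> [<-] [] ?; lia.
- move=> [j1 hj1] [j2 hj2] [[|[|k]] hk] t //= /Rc_some /= H1 /Rc_some /= H2;
    apply: val_inj => /=; move: H1 H2; rewrite /cell /=;
    repeat case: ifP => ? //; move=> [<-] [] ?; lia.
- move=> [j1 hj1] [j2 hj2] [[|[|k1]] hk1] [[|[|k2]] hk2] t //= hne /Rc_some /= H1 /Rc_some /= H2.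
  + exfalso; apply: hne; congr pair; apply: val_inj => //=; move: H1 H2; rewrite /cell /=;
    repeat case: ifP => ? //; move=> [?] [?]; lia.
  + split; apply/Rc_none => /=; move: H1 H2; rewrite /cell /=;
    repeat case: ifP => ? //; move=> [?] [?]; lia.
  + split; apply/Rc_none => /=; move: H1 H2; rewrite /cell /=;
    repeat case: ifP => ? //; move=> [?] [?]; lia.
  + exfalso; apply: hne; congr pair; apply: val_inj => //=; move: H1 H2; rewrite /cell /=;
    repeat case: ifP => ? //; move=> [?] [?]; lia.
Qed.

Lemma lower F Z n (R : array F 2 n) : is_PDA Z R -> 2*(F-Z) <= n + minn Z (F-Z).
Proof.
move=> [hc [hrow [hcol h4]]].
pose c0 : 'I_2 := ord0. pose c1 : 'I_2 := ord_max.
pose A0 := [set j | R j c0 != None]. pose A1 := [set j | R j c1 != None].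
pose E1 := [set j | R j c1 == None].
pose B := A0 :&: E1.
pose S0 := [set R j c0 | j in A0]. pose S1 := [set R j c1 | j in A1].
have cA (c : 'I_2) : #|[set j | R j c != None]| = F - Z.
  have := cardsC [set j | R j c == None]; rewrite hc card_ord.
  have -> : ~: [set j | R j c == None] = [set j | R j c != None].
    by apply/setP => j; rewrite !inE.
  lia.
have inj (c : 'I_2) : {in [set j | R j c != None] &, injective (fun j => R j c)}.
  move=> j1 j2; rewrite !inE; case E: (R j1 c) => [t|] // _ _ E2.
  by apply: (hcol _ _ c t).
have cS0 : #|S0| = F - Z by rewrite card_in_imset ?cA //; apply: inj.
have cS1 : #|S1| = F - Z by rewrite card_in_imset ?cA //; apply: inj.
have U : #|S0 :|: S1| <= n.
  apply: (@leq_trans #|[set Some t | t in [set: 'I_n]]|); last first.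
    by apply: (leq_trans (leq_imset_card _ _)); rewrite cardsT card_ord.
  apply: subset_leq_card; apply/subsetP => x; rewrite inE => /orP [] /imsetP [j];
    rewrite inE; case: (R _ _) => [t|] // _ ->; by apply: imset_f.
have I : #|S0 :&: S1| <= #|B|.
  apply: (@leq_trans #|[set R j c0 | j in B]|); last exact: leq_imset_card.
  apply: subset_leq_card; apply/subsetP => x; rewrite inE => /andP [/imsetP [j ja ->]] /imsetP [j' ja' E].
  apply: imset_f; rewrite !inE; move: ja; rewrite inE; case E0: (R j c0) => [t|] // _.
  have [-> _] := h4 j j' c0 c1 t (fun e => ltac:(by case: e)) E0 (etrans (esym E) E0).
  by rewrite eqxx.
have BZ : #|B| <= Z.
  rewrite -(hc c1); apply: subset_leq_card; apply/subsetP => j; rewrite !inE => /andP [_ ->] //.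
have BA : #|B| <= F - Z.
  rewrite -(cA c0); apply: subset_leq_card; apply/subsetP => j; rewrite !inE => /andP [-> _] //.
have := cardsUI S0 S1; lia.
Qed.

Theorem mainTheorem4 (F Z : nat) (hF : 1 <= F) (hZ : Z <= F) :
  s_is F 2 Z (if 2 * Z <= F then 2 * F - 3 * Z else F - Z).
Proof.
case: ifP => h.
- split.
  + have -> : 2 * F - 3 * Z = Z + 2 * (F - 2 * Z) by lia.
    exists (Rc F Z (F - 2*Z)); apply: Rc_PDA; lia.
  + move=> n R /lower; lia.
- split.
  + have -> : F - Z = (F - Z) + 2 * 0 by lia.
    exists (Rc F (F - Z) 0); apply: Rc_PDA; lia.
  + move=> n R /lower; lia.
Qed.
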